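(* Let $\chi$ be a kernel, let $f:\mathbb{R}^+\to\mathbb{R}$ be bounded, and let $t\in\mathbb{R}^+$ be a point of non-removable jump discontinuity of $f$. For $\alpha\in\mathbb{R}$ the following are equivalent: (i) $\displaystyle\lim_{w\to\infty,\ w\log t\in\mathbb{Z}}(S_w^\chi f)(t)=\alpha f(t+0)+[1-\alpha-\chi(1)]f(t-0)+\chi(1)f(t)$; (ii) $\psi_\chi^-(1)=\alpha$; (iii) $\psi_\chi^+(1)=1-\alpha-\chi(1)$.
   Context: Let $\mathbb{R}^+=(0,\infty)$. For $\chi:\mathbb{R}^+\to\mathbb{R}$ and $\nu\ge 0$ set $M_\nu(\chi):=\sup_{u>0}\sum_{k\in\mathbb{Z}}|\chi(e^{-k}u)|\,|k-\log u|^\nu$ (with $|k-\log u|^0:=1$). A kernel is a function $\chi:\mathbb{R}^+\to\mathbb{R}$ such that (K1) $\sum_{k\in\mathbb{Z}}\chi(e^{-k}u)=1$ for every $u\in\mathbb{R}^+$, and (K2) $M_0(\chi)<\infty$ and $M_\nu(\chi)<\infty$ for some $\nu>0$. For a bounded $f:\mathbb{R}^+\to\mathbb{R}$, $w>0$ and $t\in\mathbb{R}^+$, the exponential sampling series is $(S_w^\chi f)(t)=\sum_{k\in\mathbb{Z}}\chi(e^{-k}t^w)\,f(e^{k/w})$. Define $\psi_\chi^+(u):=\sum_{k\in\mathbb{Z},\,k<\log u}\chi(e^{-k}u)$ and $\psi_\chi^-(u):=\sum_{k\in\mathbb{Z},\,k>\log u}\chi(e^{-k}u)$ for $u\in\mathbb{R}^+$.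 $f(t\pm0)$ denote the right/left limits of $f$ at $t$; $t$ is a non-removable jump discontinuity of $f$ if $f(t+0)$ and $f(t-0)$ exist, are finite, and $f(t+0)\ne f(t-0)$. The limit in (i) is taken as $w\to\infty$ through those $w>0$ with $w\log t\in\mathbb{Z}$. *)

(* Defs.v *)
From Stdlib Require Import Reals Lra ZArith.
From Coquelicot Require Import Coquelicot.
Open Scope R_scope.

(* Sum over k in Z of g k, as the sum of the two one-sided series
   k = 0,1,2,... and k = -1,-2,...  (all sums used are absolutely
   convergent under the kernel hypotheses). *)
Definition zsum (g : Z -> R) : R :=
  Series (fun n : nat => g (Z.of_nat n)) + Series (fun n : nat => g (- Z.of_nat (S n))%Z).

(* |x|^nu, with the convention |x|^0 := 1 (and 0^nu = 0 for nu > 0). *)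
Definition pw (x nu : R) : R :=
  if Req_EM_T nu 0 then 1
  else if Req_EM_T x 0 then 0 else Rpower (Rabs x) nu.

(* M_nu(chi) < +oo : the (nonnegative) series are bounded uniformly in u > 0,
   i.e. all symmetric partial sums sum_{|k|<=N} are bounded by a common B. *)
Definition M_finite (chi : R -> R) (nu : R) : Prop :=
  exists B : R, forall u : R, 0 < u -> forall N : nat,
    sum_f_R0 (fun n : nat =>
       let k := (Z.of_nat n - Z.of_nat N)%Z in
       Rabs (chi (exp (- IZR k) * u)) * pw (IZR k - ln u) nu) (2 * N) <= B.

Definition is_kernel (chi : R -> R) : Prop :=
  (forall u : R, 0 < u -> zsum (fun k => chi (exp (- IZR k) * u)) = 1) /\
  M_finite chi 0 /\ (exists nu : R, 0 < nu /\ M_finite chi nu).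

Definition bounded_pos (f : R -> R) : Prop :=
  exists B : R, forall x : R, 0 < x -> Rabs (f x) <= B.

Definition S_w (chi f : R -> R) (w t : R) : R :=
  zsum (fun k => chi (exp (- IZR k) * Rpower t w) * f (exp (IZR k / w))).

Definition psi_plus (chi : R -> R) (u : R) : R :=
  zsum (fun k => if Rlt_dec (IZR k) (ln u) then chi (exp (- IZR k) * u) else 0).

Definition psi_minus (chi : R -> R) (u : R) : R :=
  zsum (fun k => if Rlt_dec (ln u) (IZR k) then chi (exp (- IZR k) * u) else 0).

Definition lim_along_lattice (F : R -> R) (t L : R) : Prop :=
  forall eps : R, 0 < eps -> exists W : R, forall w : R,
    W < w -> 0 < w -> (exists m : Z, w * ln t = IZR m) -> Rabs (F w - L) < eps.

(* Main.v *)
From Stdlib Require Import Reals Lra ZArith Lia.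
From Stdlib Require Import Reals.
From Coquelicot Require Import Coquelicot.
Require Import Defs.
Open Scope R_scope.

Lemma ex_series_bounded (a : nat -> R) B :
  (forall n, 0 <= a n) -> (forall n, sum_f_R0 a n <= B) -> ex_series a.
Proof.
  intros H0 HB.
  destruct (growing_cv (fun n => sum_f_R0 a n)) as [l Hl].
  - intro n. simpl. specialize (H0 (S n)). lra.
  - exists B. intros x [n ->]. apply HB.
  - exists l. apply is_series_Reals. exact Hl.
Qed.

Lemma Un_cv_series (a : nat -> R) : ex_series a -> Un_cv (fun n => sum_f_R0 a n) (Series a).
Proof.
  intro H. apply Series_correct in H. apply is_series_Reals in H. exact H.
Qed.

Lemma partial_le_Series (a : nat -> R) n : (forall n, 0 <= a n) -> ex_series a ->
  sum_f_R0 a n <= Series a.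
Proof. intros H0 H. apply sum_incr; auto. apply Un_cv_series; auto. Qed.

Lemma Series_le_bound (a : nat -> R) K : ex_series a -> (forall n, sum_f_R0 a n <= K) ->
  Series a <= K.
Proof.
  intros H HK. destruct (Rle_lt_dec (Series a) K) as [h|h]; auto.
  destruct (Un_cv_series a H (Series a - K)) as [N HN]; [lra|].
  specialize (HN N (le_n _)). specialize (HK N). unfold Rdist in HN.
  apply Rabs_def2 in HN. lra.
Qed.

Lemma sum_shift_le (g : nat -> R) : (forall n, 0 <= g n) ->
  forall a n, sum_f_R0 (fun i => g (a + i)%nat) n <= sum_f_R0 g (a + n).
Proof.
  intros H0 a. revert g H0. induction a as [|a IH]; intros g H0 n.
  - simpl. right. reflexivity.
  - replace (S a + n)%nat with (S (a + n)) by lia.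
    rewrite (decomp_sum g (S (a+n))) by lia. simpl Init.Nat.pred.
    specialize (IH (fun i => g (S i)) (fun i => H0 (S i)) n). simpl in IH.
    assert (sum_f_R0 (fun i : nat => g (S a + i)%nat) n = sum_f_R0 (fun i : nat => g (S (a + i))) n) as ->.
    { apply sum_eq. intros. f_equal. }
    specialize (H0 0%nat). lra.
Qed.

Lemma sum_rev (g : nat -> R) N : sum_f_R0 (fun n => g (N - n)%nat) N = sum_f_R0 g N.
Proof.
  induction N as [|N IH].
  - simpl. reflexivity.
  - rewrite (decomp_sum _ (S N)) by lia. simpl Init.Nat.pred.
    rewrite tech5. rewrite <- IH.
    replace (S N - 0)%nat with (S N) by lia.
    assert (sum_f_R0 (fun i : nat => g (S N - S i)%nat) N = sum_f_R0 (fun n : nat => g (N - n)%nat) N) as ->.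
    { apply sum_eq. intros. f_equal. }
    lra.
Qed.

Lemma sum_mono (g : nat -> R) : (forall n, 0 <= g n) -> forall n m, (n <= m)%nat ->
  sum_f_R0 g n <= sum_f_R0 g m.
Proof.
  intros H0 n m Hnm. induction Hnm. lra. rewrite tech5. specialize (H0 (S m)). lra.
Qed.

Lemma sym_bound (h : Z -> R) B : (forall k, 0 <= h k) ->
  (forall N, sum_f_R0 (fun i => h (Z.of_nat i - Z.of_nat N)%Z) (2 * N) <= B) ->
  (forall N, sum_f_R0 (fun n => h (Z.of_nat n)) N <= B) /\
  (forall N, sum_f_R0 (fun n => h (- Z.of_nat n)%Z) N <= B).
Proof.
  intros H0 HB. split; intro N.
  - eapply Rle_trans; [|apply (HB N)].
    replace (2 * N)%nat with (N + N)%nat by lia.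
    eapply Rle_trans; [|apply (sum_shift_le (fun i => h (Z.of_nat i - Z.of_nat N)%Z) (fun _ => H0 _) N N)].
    right. apply sum_eq. intros i _. f_equal. lia.
  - eapply Rle_trans; [|apply (HB N)].
    eapply Rle_trans; [|apply (sum_mono _ (fun _ => H0 _) N (2*N)); lia].
    rewrite <- (sum_rev (fun i => h (Z.of_nat i - Z.of_nat N)%Z)).
    right. apply sum_eq. intros i Hi. f_equal. rewrite Nat2Z.inj_sub by lia. lia.
Qed.

Definition zabs (g : Z -> R) : Prop :=
  ex_series (fun n => Rabs (g (Z.of_nat n))) /\ ex_series (fun n => Rabs (g (- Z.of_nat n)%Z)).

Lemma ex_series_R_le (a b : nat -> R) : (forall n, Rabs (a n) <= b n) -> ex_series b -> ex_series a.
Proof. intros H Hb. apply (@ex_series_le R_AbsRing R_CompleteNormedModule a b); auto. Qed.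

Lemma ex_series_lin (a b : nat -> R) c1 c2 : ex_series a -> ex_series b ->
  ex_series (fun n => c1 * a n + c2 * b n).
Proof.
  intros Ha Hb. apply (@ex_series_ext R_AbsRing R_NormedModule (fun n => plus (scal c1 (a n)) (scal c2 (b n)))).
  - intro n. reflexivity.
  - apply (@ex_series_plus R_AbsRing R_NormedModule); apply (@ex_series_scal_l R_AbsRing R_NormedModule); auto.
Qed.

Lemma zabs_le2 (g a b : Z -> R) c1 c2 :
  (forall k, Rabs (g k) <= c1 * Rabs (a k) + c2 * Rabs (b k)) -> zabs a -> zabs b -> zabs g.
Proof.
  intros H [Ha1 Ha2] [Hb1 Hb2]. split.
  - apply (ex_series_R_le _ (fun n => c1 * Rabs (a (Z.of_nat n)) + c2 * Rabs (b (Z.of_nat n)))).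
    + intro n. rewrite Rabs_Rabsolu. apply H.
    + apply ex_series_lin; auto.
  - apply (ex_series_R_le _ (fun n => c1 * Rabs (a (- Z.of_nat n)%Z) + c2 * Rabs (b (- Z.of_nat n)%Z))).
    + intro n. rewrite Rabs_Rabsolu. apply H.
    + apply ex_series_lin; auto.
Qed.

Lemma zabs_le (g a : Z -> R) c :
  (forall k, Rabs (g k) <= c * Rabs (a k)) -> zabs a -> zabs g.
Proof.
  intros H Ha. apply (zabs_le2 g a a c 0); auto. intro k. specialize (H k). lra.
Qed.

Lemma zabs_ex (g : Z -> R) : zabs g ->
  ex_series (fun n => g (Z.of_nat n)) /\ ex_series (fun n => g (- Z.of_nat (S n))%Z).
Proof.
  intros [H1 H2]. split.
  - apply ex_series_Rabs. exact H1.
  - apply ex_series_Rabs. apply (@ex_series_incr_1 R_AbsRing R_NormedModule (fun n => Rabs (g (- Z.of_nat n)%Z))). exact H2.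
Qed.

Lemma zsum_ext (g h : Z -> R) : (forall k, g k = h k) -> zsum g = zsum h.
Proof. intro H. unfold zsum. f_equal; apply Series_ext; intro; apply H. Qed.

Lemma zabs_ext (g h : Z -> R) : (forall k, g k = h k) -> zabs g -> zabs h.
Proof. intros H Hg. apply (zabs_le h g 1); auto. intro k. rewrite H. lra. Qed.

Lemma zsum_plus (a b : Z -> R) : zabs a -> zabs b -> zsum (fun k => a k + b k) = zsum a + zsum b.
Proof.
  intros Ha Hb. apply zabs_ex in Ha as [Ha1 Ha2]. apply zabs_ex in Hb as [Hb1 Hb2].
  unfold zsum. rewrite (Series_plus (fun n => a (Z.of_nat n))) by auto.
  rewrite (Series_plus (fun n => a (- Z.of_nat (S n))%Z)) by auto. lra.
Qed.

Lemma zsum_scal (c : R) (a : Z -> R) : zsum (fun k => c * a k) = c * zsum a.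
Proof.
  unfold zsum. rewrite (Series_scal_l c (fun n => a (Z.of_nat n))).
  rewrite (Series_scal_l c (fun n => a (- Z.of_nat (S n))%Z)). ring.
Qed.

Lemma shift1 (g : Z -> R) : zabs g -> zabs (fun k => g (k + 1)%Z) /\ zsum (fun k => g (k + 1)%Z) = zsum g.
Proof.
  intros Hg. pose proof (zabs_ex g Hg) as [E1 E2]. destruct Hg as [H1 H2]. split; [split|].
  - apply (@ex_series_ext R_AbsRing R_NormedModule (fun n => Rabs (g (Z.of_nat (S n))))).
    + intro n. f_equal. f_equal. lia.
    + apply (@ex_series_incr_1 R_AbsRing R_NormedModule (fun n => Rabs (g (Z.of_nat n)))). exact H1.
  - apply (@ex_series_incr_1 R_AbsRing R_NormedModule (fun n => Rabs (g (- Z.of_nat n + 1)%Z))).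
    apply (@ex_series_ext R_AbsRing R_NormedModule (fun n => Rabs (g (- Z.of_nat n)%Z))); auto.
    intro n. f_equal. f_equal. lia.
  - unfold zsum.
    assert (EN : ex_series (fun n => g (- Z.of_nat n)%Z)) by (apply ex_series_Rabs; auto).
    rewrite (Series_incr_1 (fun n => g (Z.of_nat n))) by auto.
    rewrite (Series_ext (fun n => g (- Z.of_nat (S n) + 1)%Z) (fun n => g (- Z.of_nat n)%Z)).
    2:{ intro n. f_equal. lia. }
    rewrite (Series_incr_1 (fun n => g (- Z.of_nat n)%Z)) by auto.
    rewrite (Series_ext (fun n => g (Z.of_nat n + 1)%Z) (fun n => g (Z.of_nat (S n)))).
    2:{ intro n. f_equal. lia. }
    simpl (Z.of_nat 0). simpl (- 0)%Z. ring.
Qed.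

Lemma shiftm1 (g : Z -> R) : zabs g -> zabs (fun k => g (k - 1)%Z).
Proof.
  intros [H1 H2]. split.
  - apply (@ex_series_incr_1 R_AbsRing R_NormedModule (fun n => Rabs (g (Z.of_nat n - 1)%Z))).
    apply (@ex_series_ext R_AbsRing R_NormedModule (fun n => Rabs (g (Z.of_nat n)))); auto.
    intro n. f_equal. f_equal. lia.
  - apply (@ex_series_ext R_AbsRing R_NormedModule (fun n => Rabs (g (- Z.of_nat (S n))%Z))).
    + intro n. f_equal. f_equal. lia.
    + apply (@ex_series_incr_1 R_AbsRing R_NormedModule (fun n => Rabs (g (- Z.of_nat n)%Z))). exact H2.
Qed.

Lemma shift (m : Z) : forall g : Z -> R, zabs g ->
  zabs (fun k => g (k + m)%Z) /\ zsum (fun k => g (k + m)%Z) = zsum g.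
Proof.
  induction m as [|m IH|m IH] using Z.peano_ind; intros g Hg.
  - split.
    + apply (zabs_ext g); auto. intro k. f_equal. lia.
    + apply zsum_ext. intro k. f_equal. lia.
  - destruct (shift1 g Hg) as [G1 G2].
    destruct (IH _ G1) as [I1 I2]. split.
    + revert I1. apply zabs_ext. intro k. f_equal. lia.
    + rewrite <- G2, <- I2. apply zsum_ext. intro k. f_equal. lia.
  - pose proof (shiftm1 g Hg) as G1.
    destruct (IH _ G1) as [I1 I2]. destruct (shift1 _ G1) as [_ J2]. split.
    + revert I1. apply zabs_ext. intro k. f_equal. lia.
    + rewrite (zsum_ext (fun k => g (k + Z.pred m)%Z) (fun k => g (k + m - 1)%Z)) by (intro; f_equal; lia).
      rewrite I2. rewrite <- J2. apply zsum_ext. intro k. f_equal. lia.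
Qed.
Lemma right_lim (f : R -> R) t l e : 0 < e -> filterlim f (at_right t) (locally l) ->
  exists d, 0 < d /\ forall x, t < x < t + d -> Rabs (f x - l) < e.
Proof.
  intros He H. destruct (proj1 (filterlim_locally f l) H (mkposreal e He)) as [d Hd].
  exists d. split. apply cond_pos. intros x Hx. specialize (Hd x).
  unfold ball in Hd; simpl in Hd; unfold AbsRing_ball, abs, minus, plus, opp in Hd; simpl in Hd.
  apply Hd. rewrite Rabs_right; lra. lra.
Qed.
Lemma left_lim (f : R -> R) t l e : 0 < e -> filterlim f (at_left t) (locally l) ->
  exists d, 0 < d /\ forall x, t - d < x < t -> Rabs (f x - l) < e.
Proof.
  intros He H. destruct (proj1 (filterlim_locally f l) H (mkposreal e He)) as [d Hd].
  exists d. split. apply cond_pos. intros x Hx. specialize (Hd x).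
  unfold ball in Hd; simpl in Hd; unfold AbsRing_ball, abs, minus, plus, opp in Hd; simpl in Hd.
  apply Hd. rewrite Rabs_left; lra. lra.
Qed.

Lemma side_bound (a d : nat -> R) e1 C N δ : 0 <= e1 -> 0 <= C ->
  ex_series (fun n => Rabs (a n)) -> ex_series (fun n => Rabs (d n)) ->
  (forall n, (n <= N)%nat -> Rabs (d n) <= e1 * Rabs (a n)) ->
  (forall n, Rabs (d n) <= C * Rabs (a n)) ->
  (forall M, (N <= M)%nat -> sum_f_R0 (fun n => Rabs (a n)) M - sum_f_R0 (fun n => Rabs (a n)) N <= δ) ->
  Rabs (Series d) <= e1 * Series (fun n => Rabs (a n)) + C * δ.
Proof.
  intros He1 HC Ea Ed H1 H2 H3.
  eapply Rle_trans; [apply Series_Rabs; auto|].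
  apply Series_le_bound; auto. intro M.
  set (p := fun M => sum_f_R0 (fun n => Rabs (a n)) M).
  assert (Hd0 : 0 <= δ) by (specialize (H3 N (le_n _)); lra).
  assert (K : sum_f_R0 (fun n => Rabs (d n)) M <= e1 * p M + C * (p M - p (Nat.min M N))).
  { induction M as [|M IH].
    - unfold p; simpl. replace (Nat.min 0 N) with 0%nat by lia. simpl.
      specialize (H1 0%nat (Nat.le_0_l _)). lra.
    - unfold p in *.
      destruct (le_lt_dec (S M) N) as [h|h].
      + replace (Nat.min (S M) N) with (S M) by lia. replace (Nat.min M N) with M in IH by lia.
        rewrite !tech5.
        specialize (H1 _ h). rewrite !Rmult_plus_distr_l, !Rmult_minus_distr_l in *. lra.
      + replace (Nat.min (S M) N) with N by lia. replace (Nat.min M N) with N in IH by lia.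
        rewrite !tech5. specialize (H2 (S M)). pose proof (Rabs_pos (a (S M))).
        assert (0 <= e1 * Rabs (a (S M))) by (apply Rmult_le_pos; auto). rewrite !Rmult_plus_distr_l, !Rmult_minus_distr_l in *. lra. }
  eapply Rle_trans; [exact K|].
  assert (p M <= Series (fun n => Rabs (a n))) by (apply partial_le_Series; auto; intro; apply Rabs_pos).
  assert (p M - p (Nat.min M N) <= δ).
  { destruct (le_lt_dec M N) as [h|h].
    - replace (Nat.min M N) with M by lia. lra.
    - replace (Nat.min M N) with N by lia. apply H3. lia. }
  apply Rplus_le_compat. apply Rmult_le_compat_l; auto. apply Rmult_le_compat_l; auto.
Qed.

Lemma pw0 x : pw x 0 = 1.
Proof. unfold pw. destruct (Req_EM_T 0 0); [reflexivity|lra]. Qed.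

Lemma kernel_abs (chi : R -> R) : is_kernel chi -> forall u, 0 < u ->
  zabs (fun k => chi (exp (- IZR k) * u)).
Proof.
  intros [_ [[B HB] _]] u Hu.
  destruct (sym_bound (fun k => Rabs (chi (exp (- IZR k) * u))) B) as [S1 S2].
  - intro; apply Rabs_pos.
  - intro N. eapply Rle_trans; [|apply (HB u Hu N)]. right. apply sum_eq. intros i _.
    simpl. rewrite pw0. ring.
  - split; eapply ex_series_bounded; eauto; intro; apply Rabs_pos.
Qed.

Lemma zabs_sides (g : Z -> R) : zabs g ->
  ex_series (fun n => Rabs (g (Z.of_nat n))) /\ ex_series (fun n => Rabs (g (- Z.of_nat (S n))%Z)).
Proof.
  intros [H1 H2]. split; auto.
  apply (@ex_series_incr_1 R_AbsRing R_NormedModule (fun n => Rabs (g (- Z.of_nat n)%Z))). exact H2.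
Qed.

Definition Pm (chi : R -> R) (k : Z) := if Rlt_dec (ln 1) (IZR k) then chi (exp (- IZR k) * 1) else 0.
Definition Pp (chi : R -> R) (k : Z) := if Rlt_dec (IZR k) (ln 1) then chi (exp (- IZR k) * 1) else 0.
Definition Dz (chi : R -> R) (k : Z) := if Z.eq_dec k 0 then chi (exp (- IZR k) * 1) else 0.

Lemma Zcases k : ((0 < k)%Z /\ 0 < IZR k) \/ k = 0%Z \/ ((k < 0)%Z /\ IZR k < 0).
Proof.
  destruct (Z.lt_trichotomy 0 k) as [h|[h|h]].
  - left. split; auto. apply IZR_lt in h. exact h.
  - right; left; auto.
  - right; right. split; auto. apply IZR_lt in h. exact h.
Qed.

Lemma decomp_pt chi k : chi (exp (- IZR k) * 1) = Pm chi k + Pp chi k + Dz chi k.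
Proof.
  unfold Pm, Pp, Dz. rewrite ln_1.
  destruct (Rlt_dec 0 (IZR k)); destruct (Rlt_dec (IZR k) 0); destruct (Z.eq_dec k 0);
  destruct (Zcases k) as [[h1 h2]|[h|[h1 h2]]]; try subst k; simpl in *; try lia; try lra.
Qed.

Lemma abs_parts chi k : Rabs (Pm chi k) <= 1 * Rabs (chi (exp (- IZR k) * 1)) /\
  Rabs (Pp chi k) <= 1 * Rabs (chi (exp (- IZR k) * 1)) /\
  Rabs (Dz chi k) <= 1 * Rabs (chi (exp (- IZR k) * 1)).
Proof.
  pose proof (Rabs_pos (chi (exp (- IZR k) * 1))).
  unfold Pm, Pp, Dz. repeat split;
  [destruct (Rlt_dec (ln 1) (IZR k))|destruct (Rlt_dec (IZR k) (ln 1))|destruct (Z.eq_dec k 0)];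
  rewrite ?Rabs_R0; lra.
Qed.

Lemma zsum_Dz chi : is_kernel chi -> zsum (Dz chi) = chi 1.
Proof.
  intro Hk. pose proof (kernel_abs chi Hk 1 Rlt_0_1) as Ka.
  assert (KD : zabs (Dz chi)) by (apply (zabs_le _ _ 1 (fun k => proj2 (proj2 (abs_parts chi k))) Ka)).
  destruct (zabs_ex _ KD) as [E1 _].
  unfold zsum. rewrite Series_incr_1 by exact E1.
  rewrite (Series_ext _ (fun n => 0 * 0)).
  2:{ intro n. unfold Dz. destruct (Z.eq_dec _ 0); [lia|ring]. }
  rewrite (Series_ext (fun n => Dz chi (- Z.of_nat (S n))%Z) (fun n => 0 * 0)).
  2:{ intro n. unfold Dz. destruct (Z.eq_dec _ 0); [lia|ring]. }
  rewrite Series_scal_l. unfold Dz. simpl. destruct (Z.eq_dec 0 0); [|lia].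
  rewrite Ropp_0, exp_0. ring_simplify. f_equal. ring.
Qed.

Lemma psi_sum chi : is_kernel chi -> psi_minus chi 1 + psi_plus chi 1 + chi 1 = 1.
Proof.
  intro Hk. pose proof (kernel_abs chi Hk 1 Rlt_0_1) as Ka.
  assert (K1 : zabs (Pm chi)) by (apply (zabs_le _ _ 1 (fun k => proj1 (abs_parts chi k)) Ka)).
  assert (K2 : zabs (Pp chi)) by (apply (zabs_le _ _ 1 (fun k => proj1 (proj2 (abs_parts chi k))) Ka)).
  assert (K3 : zabs (Dz chi)) by (apply (zabs_le _ _ 1 (fun k => proj2 (proj2 (abs_parts chi k))) Ka)).
  change (zsum (Pm chi) + zsum (Pp chi) + chi 1 = 1).
  rewrite <- (zsum_Dz chi Hk).
  rewrite <- (proj1 Hk 1 Rlt_0_1).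
  rewrite (zsum_ext (fun k => chi (exp (- IZR k) * 1)) (fun k => (Pm chi k + Pp chi k) + Dz chi k)) by (intro; apply decomp_pt).
  rewrite zsum_plus; auto. rewrite zsum_plus; auto.
  apply (zabs_le2 _ (Pm chi) (Pp chi) 1 1); auto. intro k. rewrite !Rmult_1_l. apply Rabs_triang.
Qed.

Lemma exp_window r y Y : 0 < r -> 0 < y <= Y -> Y < ln (1 + r) ->
  (1 < exp y < 1 + r) /\ (1 - r < exp (- y) < 1).
Proof.
  intros Hr Hy HY.
  assert (E1 : 1 < exp y) by (rewrite <- exp_0; apply exp_increasing; lra).
  assert (E2 : exp y < 1 + r) by (rewrite <- (exp_ln (1 + r)) by lra; apply exp_increasing; lra).
  split; [lra|]. rewrite exp_Ropp. split.
  - apply (Rmult_lt_reg_r (exp y)); [lra|]. rewrite Rinv_l by lra.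
    assert ((1 - r) * exp y < (1 - r) * (1 + r) \/ 1 - r <= 0) as [h|h].
    { destruct (Rle_lt_dec (1 - r) 0); [right; auto|left; apply Rmult_lt_compat_l; lra]. }
    + nra.
    + nra.
  - apply (Rmult_lt_reg_r (exp y)); [lra|]. rewrite Rinv_l by lra. lra.
Qed.

Lemma IZR_nat n : IZR (Z.of_nat n) = INR n.
Proof. rewrite <- INR_IZR_INZ. reflexivity. Qed.

Lemma IZR_negS n : IZR (- Z.of_nat (S n))%Z = - (INR n + 1).
Proof. rewrite opp_IZR, IZR_nat, S_INR. reflexivity. Qed.

Lemma zabs_sum (a b : Z -> R) : zabs a -> zabs b -> zabs (fun k => a k + b k).
Proof. intros. apply (zabs_le2 _ a b 1 1); auto. intro k. rewrite !Rmult_1_l. apply Rabs_triang. Qed.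

Lemma main_lim (chi f : R -> R) (t fp fm : R) :
  is_kernel chi -> bounded_pos f -> 0 < t ->
  filterlim f (at_right t) (locally fp) ->
  filterlim f (at_left t) (locally fm) ->
  lim_along_lattice (fun w => S_w chi f w t) t
    (fp * psi_minus chi 1 + fm * psi_plus chi 1 + f t * chi 1).
Proof.
  intros Hk [Bf HB] Ht Hr Hl eps Heps.
  assert (Bf0 : 0 <= Bf) by (specialize (HB 1 Rlt_0_1); pose proof (Rabs_pos (f 1)); lra).
  pose proof (kernel_abs chi Hk 1 Rlt_0_1) as Ka.
  set (a := fun k : Z => chi (exp (- IZR k) * 1)) in *.
  set (c := fun k : Z => if Z.eq_dec k 0 then f t else if Z_lt_dec 0 k then fp else fm).
  assert (Hc : forall k, Rabs (c k) <= Bf + Rabs fp + Rabs fm).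
  { intro k. unfold c. pose proof (HB t Ht). pose proof (Rabs_pos fp). pose proof (Rabs_pos fm).
    destruct (Z.eq_dec k 0); [lra|]. destruct (Z_lt_dec 0 k); lra. }
  set (H := fun k => a k * c k).
  assert (KH : zabs H).
  { apply (zabs_le H a (Bf + Rabs fp + Rabs fm)); auto. intro k. unfold H. rewrite Rabs_mult.
    rewrite Rmult_comm. apply Rmult_le_compat_r; [apply Rabs_pos|apply Hc]. }
  assert (HH : zsum H = fp * psi_minus chi 1 + fm * psi_plus chi 1 + f t * chi 1).
  { assert (P1 : zabs (fun k => fp * Pm chi k)).
    { apply (zabs_le _ a (Rabs fp)); auto. intro k. rewrite Rabs_mult.
      apply Rmult_le_compat_l; [apply Rabs_pos|]. pose proof (proj1 (abs_parts chi k)). unfold a; lra. }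
    assert (P2 : zabs (fun k => fm * Pp chi k)).
    { apply (zabs_le _ a (Rabs fm)); auto. intro k. rewrite Rabs_mult.
      apply Rmult_le_compat_l; [apply Rabs_pos|]. pose proof (proj1 (proj2 (abs_parts chi k))). unfold a; lra. }
    assert (P3 : zabs (fun k => f t * Dz chi k)).
    { apply (zabs_le _ a (Rabs (f t))); auto. intro k. rewrite Rabs_mult.
      apply Rmult_le_compat_l; [apply Rabs_pos|]. pose proof (proj2 (proj2 (abs_parts chi k))). unfold a; lra. }
    rewrite (zsum_ext H (fun k => fp * Pm chi k + (fm * Pp chi k + f t * Dz chi k))).
    2:{ intro k. unfold H, a, c, Pm, Pp, Dz. rewrite ln_1.
        destruct (Rlt_dec 0 (IZR k)); destruct (Rlt_dec (IZR k) 0); destruct (Z.eq_dec k 0);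
        destruct (Z_lt_dec 0 k);
        destruct (Zcases k) as [[h1 h2]|[h|[h1 h2]]]; try subst k; simpl in *; try lia; try lra. }
    rewrite zsum_plus; auto.
    2:{ apply (zabs_sum _ _ P2 P3). }
    rewrite zsum_plus; auto. rewrite !zsum_scal. rewrite (zsum_Dz chi Hk).
    unfold psi_minus, psi_plus, Pm, Pp. ring. }
  rewrite <- HH. clear HH.
  set (C := 2 * Bf + Rabs fp + Rabs fm).
  assert (C0 : 0 <= C) by (unfold C; pose proof (Rabs_pos fp); pose proof (Rabs_pos fm); lra).
  destruct (zabs_sides a Ka) as [Ap An].
  set (Apos := Series (fun n => Rabs (a (Z.of_nat n)))).
  set (Aneg := Series (fun n => Rabs (a (- Z.of_nat (S n))%Z))).
  assert (Apos0 : 0 <= Apos).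
  { eapply Rle_trans; [|apply (partial_le_Series _ 0 (fun _ => Rabs_pos _) Ap)]. simpl. apply Rabs_pos. }
  assert (Aneg0 : 0 <= Aneg).
  { eapply Rle_trans; [|apply (partial_le_Series _ 0 (fun _ => Rabs_pos _) An)]. simpl. apply Rabs_pos. }
  set (e1 := eps / (4 * (Apos + Aneg + 1))).
  set (δ := eps / (4 * (C + 1))).
  assert (e1p : 0 < e1) by (unfold e1; apply Rdiv_lt_0_compat; lra).
  assert (δp : 0 < δ) by (unfold δ; apply Rdiv_lt_0_compat; lra).
  assert (Ee1 : e1 * (Apos + Aneg + 1) = eps / 4) by (unfold e1; field; lra).
  assert (Eδ : δ * (C + 1) = eps / 4) by (unfold δ; field; lra).
  destruct (right_lim f t fp e1 e1p Hr) as [dr [dr0 Hdr]].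
  destruct (left_lim f t fm e1 e1p Hl) as [dl [dl0 Hdl]].
  destruct (Un_cv_series _ Ap (δ / 2)) as [Np HNp]; [lra|].
  destruct (Un_cv_series _ An (δ / 2)) as [Nn HNn]; [lra|].
  set (N := Nat.max Np Nn).
  assert (Tp : forall M, (N <= M)%nat -> sum_f_R0 (fun n => Rabs (a (Z.of_nat n))) M - sum_f_R0 (fun n => Rabs (a (Z.of_nat n))) N <= δ).
  { intros M HM. pose proof (HNp M ltac:(unfold N in *; lia)). pose proof (HNp N ltac:(unfold N; lia)).
    unfold Rdist in *. apply Rabs_def2 in H0. apply Rabs_def2 in H1. fold Apos in H0, H1. lra. }
  assert (Tn : forall M, (N <= M)%nat -> sum_f_R0 (fun n => Rabs (a (- Z.of_nat (S n))%Z)) M - sum_f_R0 (fun n => Rabs (a (- Z.of_nat (S n))%Z)) N <= δ).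
  { intros M HM. pose proof (HNn M ltac:(unfold N in *; lia)). pose proof (HNn N ltac:(unfold N; lia)).
    unfold Rdist in *. apply Rabs_def2 in H0. apply Rabs_def2 in H1. fold Aneg in H0, H1. lra. }
  set (r := Rmin dr dl / t).
  assert (r0 : 0 < r) by (unfold r; apply Rdiv_lt_0_compat; auto; apply Rmin_pos; auto).
  assert (tr1 : t * r <= dr) by (unfold r; field_simplify; [apply Rmin_l|lra]).
  assert (tr2 : t * r <= dl) by (unfold r; field_simplify; [apply Rmin_r|lra]).
  set (lr := ln (1 + r)).
  assert (lr0 : 0 < lr) by (unfold lr; rewrite <- ln_1; apply ln_increasing; lra).
  exists ((INR N + 1) / lr).
  intros w Hw Hw0 [m Hm].
  assert (Hw' : INR N + 1 < w * lr).
  { apply Rmult_lt_compat_r with (r := lr) in Hw; [|lra].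
    replace ((INR N + 1) / lr * lr) with (INR N + 1) in Hw by (field; lra). lra. }
  assert (Wl : (INR N + 1) / w < lr).
  { apply (Rmult_lt_reg_r w); [lra|]. replace ((INR N + 1) / w * w) with (INR N + 1) by (field; lra). lra. }
  assert (Win : forall n, (n <= N)%nat ->
     (1 < exp ((INR n + 1) / w) < 1 + r) /\ (1 - r < exp (- ((INR n + 1) / w)) < 1)).
  { intros n Hn. apply (exp_window r _ ((INR N + 1) / w)); auto. split.
    - apply Rdiv_lt_0_compat; auto. pose proof (pos_INR n); lra.
    - unfold Rdiv. apply Rmult_le_compat_r; [left; apply Rinv_0_lt_compat; auto|].
      apply le_INR in Hn. lra. }
  assert (Hlt : IZR m / w = ln t) by (rewrite <- Hm; field; lra).
  assert (Kg : zabs (fun k => chi (exp (- IZR k) * Rpower t w) * f (exp (IZR k / w)))).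
  { apply (zabs_le _ (fun k => chi (exp (- IZR k) * Rpower t w)) Bf).
    - intro k. rewrite Rabs_mult, Rmult_comm. apply Rmult_le_compat_r; [apply Rabs_pos| apply HB, exp_pos].
    - apply kernel_abs; auto. unfold Rpower; apply exp_pos. }
  destruct (shift m _ Kg) as [Kg1 Kg2].
  set (G := fun k => a k * f (t * exp (IZR k / w))).
  assert (EG : forall k, chi (exp (- IZR (k + m)) * Rpower t w) * f (exp (IZR (k + m) / w)) = G k).
  { intro k. unfold G, a, Rpower. rewrite Hm, plus_IZR. f_equal.
    - f_equal. rewrite <- exp_plus, Rmult_1_r. f_equal. ring.
    - f_equal. replace ((IZR k + IZR m)/w) with (IZR k / w + ln t) by (rewrite <- Hlt; field; lra).
      rewrite exp_plus, exp_ln by auto. ring. }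
  assert (KG : zabs G) by (apply (zabs_ext _ _ EG Kg1)).
  unfold S_w. rewrite <- Kg2. rewrite (zsum_ext _ G EG).
  set (d := fun k => G k + (-1) * H k).
  assert (KH' : zabs (fun k => -1 * H k)).
  { apply (zabs_le _ H 1); auto. intro k. rewrite Rabs_mult. replace (Rabs (-1)) with 1 by (rewrite Rabs_left; lra). lra. }
  assert (Kd : zabs d) by (apply (zabs_sum G _ KG KH')).
  assert (Ed : zsum G - zsum H = zsum d).
  { unfold d. rewrite zsum_plus by auto. rewrite zsum_scal. ring. }
  rewrite Ed.
  assert (dk : forall k, d k = a k * (f (t * exp (IZR k / w)) - c k)) by (intro; unfold d, G, H; ring).
  assert (dC : forall k, Rabs (d k) <= C * Rabs (a k)).
  { intro k. rewrite dk, Rabs_mult, Rmult_comm. apply Rmult_le_compat_r; [apply Rabs_pos|].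
    unfold C, Rminus. eapply Rle_trans; [apply Rabs_triang|]. rewrite Rabs_Ropp.
    pose proof (HB (t * exp (IZR k / w)) (Rmult_lt_0_compat _ _ Ht (exp_pos _))). pose proof (Hc k). lra. }
  destruct (zabs_sides d Kd) as [Dp Dn].
  assert (SP : Rabs (Series (fun n => d (Z.of_nat n))) <= e1 * Apos + C * δ).
  { apply (side_bound _ _ e1 C N δ); auto; try lra.
    - intros n Hn. destruct n as [|n'].
      + rewrite dk. simpl. unfold Rdiv. rewrite Rmult_0_l, exp_0, Rmult_1_r.
        unfold c. destruct (Z.eq_dec 0 0); [|lia]. rewrite Rminus_eq_0, Rmult_0_r, Rabs_R0.
        pose proof (Rabs_pos (a 0%Z)). simpl in *. nra.
      + rewrite dk, Rabs_mult, Rmult_comm. apply Rmult_le_compat_r; [apply Rabs_pos|].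
        rewrite IZR_nat, S_INR. unfold c. destruct (Z.eq_dec _ 0); [lia|]. destruct (Z_lt_dec 0 _); [|lia].
        destruct (Win n' ltac:(lia)) as [[W1 W2] _]. left. apply Hdr. split.
        * pose proof (Rmult_lt_compat_l t _ _ Ht W1). lra.
        * pose proof (Rmult_lt_compat_l t _ _ Ht W2). lra. }
  assert (SN : Rabs (Series (fun n => d (- Z.of_nat (S n))%Z)) <= e1 * Aneg + C * δ).
  { apply (side_bound _ _ e1 C N δ); auto; try lra.
    - intros n Hn.
      rewrite dk, Rabs_mult, Rmult_comm. apply Rmult_le_compat_r; [apply Rabs_pos|].
      rewrite IZR_negS. unfold c. destruct (Z.eq_dec _ 0); [lia|]. destruct (Z_lt_dec 0 _); [lia|].
      destruct (Win n Hn) as [_ [W1 W2]]. left. apply Hdl.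
      replace (- (INR n + 1) / w) with (- ((INR n + 1) / w)) by (field; lra). split.
      * pose proof (Rmult_lt_compat_l t _ _ Ht W1). lra.
      * pose proof (Rmult_lt_compat_l t _ _ Ht W2). lra. }
  unfold zsum. eapply Rle_lt_trans; [apply Rabs_triang|].
  assert (e1 * Apos + e1 * Aneg + e1 = eps / 4) by (rewrite <- Ee1; ring).
  assert (C * δ + δ = eps / 4) by (rewrite <- Eδ; ring).
  lra.
Qed.

Lemma lattice_pts (t X : R) : exists w, X < w /\ 0 < w /\ exists m : Z, w * ln t = IZR m.
Proof.
  set (Y := Rmax X 0 + 1).
  assert (HY : X < Y /\ 0 < Y) by (unfold Y; pose proof (Rmax_l X 0); pose proof (Rmax_r X 0); lra).
  destruct (Req_dec (ln t) 0) as [h|h].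
  - exists Y. split; [lra|]. split; [lra|]. exists 0%Z. rewrite h. simpl. ring.
  - set (A := Rabs (ln t)). assert (A0 : 0 < A) by (unfold A; apply Rabs_pos_lt; auto).
    set (z := up (Y * A)). destruct (archimed (Y * A)) as [a1 _]. fold z in a1.
    exists (IZR z / A).
    assert (Y < IZR z / A).
    { apply (Rmult_lt_reg_r A); auto. replace (IZR z / A * A) with (IZR z) by (field; lra). lra. }
    split; [lra|]. split; [lra|].
    unfold A in *. destruct (Rle_lt_dec 0 (ln t)) as [p|p].
    + rewrite Rabs_right by lra. exists z. field. auto.
    + rewrite Rabs_left by lra. exists (- z)%Z. rewrite opp_IZR. field. lra.
Qed.

Lemma lattice_unique (F : R -> R) t L1 L2 :
  lim_along_lattice F t L1 -> lim_along_lattice F t L2 -> L1 = L2.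
Proof.
  intros H1 H2. destruct (Req_dec L1 L2) as [|h]; auto.
  set (e := Rabs (L1 - L2) / 2).
  assert (e0 : 0 < e) by (unfold e; apply Rdiv_lt_0_compat; [apply Rabs_pos_lt; lra|lra]).
  destruct (H1 e e0) as [W1 HW1]. destruct (H2 e e0) as [W2 HW2].
  destruct (lattice_pts t (Rmax W1 W2)) as [w [Hw [Hw0 Hm]]].
  pose proof (Rmax_l W1 W2). pose proof (Rmax_r W1 W2).
  specialize (HW1 w ltac:(lra) Hw0 Hm). specialize (HW2 w ltac:(lra) Hw0 Hm).
  exfalso. assert (Rabs (L1 - L2) <= Rabs (F w - L2) + Rabs (F w - L1)).
  { replace (L1 - L2) with ((F w - L2) + - (F w - L1)) by ring.
    eapply Rle_trans; [apply Rabs_triang|]. rewrite Rabs_Ropp. lra. }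
  unfold e in *. lra.
Qed.

Theorem theorem2 (chi f : R -> R) (t alpha fp fm : R) :
  is_kernel chi -> bounded_pos f -> 0 < t ->
  filterlim f (at_right t) (locally fp) ->
  filterlim f (at_left t) (locally fm) ->
  fp <> fm ->
  (lim_along_lattice (fun w => S_w chi f w t) t
      (alpha * fp + (1 - alpha - chi 1) * fm + chi 1 * f t)
    <-> psi_minus chi 1 = alpha) /\
  (psi_minus chi 1 = alpha <-> psi_plus chi 1 = 1 - alpha - chi 1).
Proof.
  intros Hk Hb Ht Hr Hl Hne.
  pose proof (main_lim chi f t fp fm Hk Hb Ht Hr Hl) as ML.
  pose proof (psi_sum chi Hk) as PS.
  split; [split|split; intro; lra].
  - intro HL. pose proof (lattice_unique _ _ _ _ ML HL) as E.
    assert ((psi_minus chi 1 - alpha) * (fp - fm) = 0).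
    { replace (psi_plus chi 1) with (1 - psi_minus chi 1 - chi 1) in E by lra.
      rewrite <- (Rminus_diag_eq _ _ E). ring. }
    apply Rmult_integral in H as [H|H]; lra.
  - intro Ha.
    replace (alpha * fp + (1 - alpha - chi 1) * fm + chi 1 * f t)
      with (fp * psi_minus chi 1 + fm * psi_plus chi 1 + f t * chi 1); auto.
    replace (psi_plus chi 1) with (1 - alpha - chi 1) by lra. rewrite Ha. ring.
Qed.
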